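(* Let $m\ge 2$ and let $\langle a,b\mid (ab)^m=(ba)^m\rangle$ be the dihedral Artin group with label $2m$, and let $z_{ab}=(ab)^m$. If $x\in\langle a,z_{ab}\rangle$ is a primitive element of $\langle a,z_{ab}\rangle\cong\mathbb{Z}^2$ admitting an $n$-th root $w\in\langle a,b\rangle$ (i.e. $w^n=x$), then $n\le m$.
   Context: $z_{ab}=(ab)^m$ generates the centre of this dihedral Artin group, and $\langle a,z_{ab}\rangle$ is free abelian of rank 2. An element of a free abelian group is primitive if it is not a proper power of another element of that group. *)

(* Defs.v *)
(* The dihedral Artin group A_m = < a, b | (ab)^m = (ba)^m >
   is encoded as words in the free monoid on a, b, a^-1, b^-1 modulo the
   congruence generated by free cancellation and the defining relation. *)
From mathcomp Require Import all_boot all_algebra.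
Set Implicit Arguments. Unset Strict Implicit. Unset Printing Implicit Defensive.

(* a letter: (generator, inverted?) ; generator false = a, true = b *)
Definition letter := (bool * bool)%type.
Definition word := seq letter.

Definition linv (l : letter) : letter := (l.1, ~~ l.2).
Definition winv (w : word) : word := rev (map linv w).

Definition ga : word := [:: (false, false)].
Definition gb : word := [:: (true, false)].

Fixpoint wpow (w : word) (n : nat) : word :=
  if n is n'.+1 then w ++ wpow w n' else [::].

Definition wzpow (w : word) (z : int) : word :=
  match z with
  | Posz n => wpow w n
  | Negz n => wpow (winv w) n.+1
  end.

Inductive aeq (m : nat) : word -> word -> Prop :=
| aeq_refl u : aeq m u u
| aeq_sym u v : aeq m u v -> aeq m v u
| aeq_trans u v w : aeq m u v -> aeq m v w -> aeq m u w
| aeq_cancel u v l : aeq m (u ++ [:: l; linv l] ++ v) (u ++ v)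
| aeq_rel u v : aeq m (u ++ wpow (ga ++ gb) m ++ v) (u ++ wpow (gb ++ ga) m ++ v).

Definition zab (m : nat) : word := wpow (ga ++ gb) m.

Definition in_az (m : nat) (x : word) : Prop :=
  exists i j : int, aeq m x (wzpow ga i ++ wzpow (zab m) j).

Definition primitive_az (m : nat) (x : word) : Prop :=
  in_az m x /\ ~ (exists (y : word) (k : nat), 2 <= k /\ in_az m y /\ aeq m (wpow y k) x).

(* Main.v *)
Require Import Defs.
From mathcomp Require Import all_boot all_algebra.
From mathcomp Require Import all_order zify ring lra.

Set Implicit Arguments. Unset Strict Implicit. Unset Printing Implicit Defensive.
Import Order.TTheory GRing.Theory Num.Theory.

Section Helpers.
Local Open Scope ring_scope.

Definition lval (g : bool) (l : letter) : int :=
  if l.1 == g then (if l.2 then -1 else 1) else 0.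

Fixpoint cnt (g : bool) (w : word) : int :=
  if w is l :: w' then lval g l + cnt g w' else 0.

Lemma cnt_cat g u v : cnt g (u ++ v) = cnt g u + cnt g v.
Proof. by elim: u => [|l u IH] /=; rewrite ?add0r // IH addrA. Qed.

Lemma cnt_rev g w : cnt g (rev w) = cnt g w.
Proof.
elim: w => [|l w IH] //=; rewrite rev_cons -cats1 cnt_cat IH /= addr0 addrC //.
Qed.

Lemma cnt_map g w : cnt g (map linv w) = - cnt g w.
Proof.
elim: w => [|l w IH] /=; first by rewrite oppr0.
rewrite IH opprD; congr (_ + _); rewrite /lval /linv /=.
by case: (l.1 == g); case: l.2 => //=; rewrite ?opprK ?oppr0.
Qed.

Lemma cnt_winv g w : cnt g (winv w) = - cnt g w.
Proof. by rewrite /winv cnt_rev cnt_map. Qed.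

Lemma cnt_wpow g w n : cnt g (wpow w n) = n%:Z * cnt g w.
Proof.
elim: n => [|n IH] /=; first by rewrite mul0r.
by rewrite cnt_cat IH -[n.+1]addn1 PoszD mulrDl mul1r addrC.
Qed.

Lemma cnt_wzpow g w i : cnt g (wzpow w i) = i * cnt g w.
Proof.
case: i => n; rewrite /wzpow cnt_wpow //.
by rewrite cnt_winv NegzE mulrN mulNr.
Qed.

Lemma cnt_aeq m g u v : aeq m u v -> cnt g u = cnt g v.
Proof.
elim=> //; try (intros; congruence).
- move=> u0 v0 l; rewrite !cnt_cat /= addr0.
  suff -> : lval g l + lval g (linv l) = 0 by rewrite add0r.
  by rewrite /lval /linv /=; case: (l.1 == g); case: l.2.
- move=> u0 v0; rewrite !cnt_cat !cnt_wpow !cnt_cat; congr (_ + (_ * _ + _)).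
  by rewrite addrC.
Qed.

Lemma aeq_catl m p u v : aeq m u v -> aeq m (p ++ u) (p ++ v).
Proof.
elim=> {u v}.
- move=> u; exact: aeq_refl.
- move=> u v _ H; exact: aeq_sym.
- move=> u v w _ H1 _ H2; exact: aeq_trans H1 H2.
- by move=> u v l; have := aeq_cancel m (p ++ u) v l; rewrite -!catA.
- by move=> u v; have := aeq_rel m (p ++ u) v; rewrite -!catA.
Qed.

Lemma aeq_catr m s u v : aeq m u v -> aeq m (u ++ s) (v ++ s).
Proof.
elim=> {u v}.
- move=> u; exact: aeq_refl.
- move=> u v _ H; exact: aeq_sym.
- move=> u v w _ H1 _ H2; exact: aeq_trans H1 H2.
- by move=> u v l; have := aeq_cancel m u (v ++ s) l; rewrite -!catA.
- by move=> u v; have := aeq_rel m u (v ++ s); rewrite -!catA.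
Qed.

Lemma aeq_cat m u u' v v' : aeq m u u' -> aeq m v v' -> aeq m (u ++ v) (u' ++ v').
Proof.
move=> H1 H2; apply: aeq_trans (aeq_catr _ H1) _; exact: aeq_catl.
Qed.

Lemma linvK : involutive linv.
Proof. by case=> a b; rewrite /linv /= negbK. Qed.

Lemma winvK : involutive winv.
Proof. by move=> w; rewrite /winv map_rev revK -map_comp map_id_in // => l _ /=; rewrite linvK. Qed.

Lemma aeq_invr m u : aeq m (u ++ winv u) [::].
Proof.
elim: u => [|l u IH] /=; first exact: aeq_refl.
rewrite /winv /= rev_cons -cats1 -/(winv u).
have -> : l :: u ++ winv u ++ [:: linv l] = [:: l] ++ (u ++ winv u) ++ [:: linv l].
  by rewrite /= catA.
apply: aeq_trans (aeq_catl _ (aeq_catr _ IH)) _ => /=.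
exact: (aeq_cancel m [::] [::] l).
Qed.

Lemma aeq_invl m u : aeq m (winv u ++ u) [::].
Proof. by have := aeq_invr m (winv u); rewrite winvK. Qed.

Definition comm m u v := aeq m (u ++ v) (v ++ u).

Lemma comm_sym m u v : comm m u v -> comm m v u.
Proof. exact: aeq_sym. Qed.

Lemma comm_inv m u v : comm m u v -> comm m (winv u) v.
Proof.
move=> H; rewrite /comm; set U := winv u.
have S1 := aeq_catl (U ++ v) (aeq_invr m u).
have S2 := aeq_catr U (aeq_catl U (aeq_sym H)).
have S3 := aeq_catr (v ++ U) (aeq_invl m u).
rewrite cats0 -!catA in S1; rewrite -!catA in S2 S3; rewrite /= in S3.
exact: aeq_trans (aeq_sym S1) (aeq_trans S2 S3).
Qed.

Lemma comm_pow m u v n : comm m u v -> comm m (wpow u n) v.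
Proof.
move=> H; elim: n => [|n IH] /=; first by rewrite /comm cats0; exact: aeq_refl.
rewrite /comm -catA.
apply: aeq_trans (aeq_catl _ IH) _.
rewrite !catA; apply: aeq_catr; exact: H.
Qed.

Lemma comm_zpow m u v i : comm m u v -> comm m (wzpow u i) v.
Proof. by case: i => n H; rewrite /wzpow; apply: comm_pow => //; apply: comm_inv. Qed.

Lemma wpow_comm_cat m u v k : comm m u v ->
  aeq m (wpow (u ++ v) k) (wpow u k ++ wpow v k).
Proof.
move=> H; elim: k => [|k IH] /=; first exact: aeq_refl.
rewrite -catA; apply: aeq_trans (aeq_catl _ (aeq_catl _ IH)) _.
rewrite -!catA; apply: aeq_catl; rewrite !catA; apply: aeq_catr.
exact: (comm_sym (comm_pow k H)).
Qed.

Lemma wpowD w a b : wpow w (a + b) = wpow w a ++ wpow w b.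
Proof. by elim: a => [|a IH] //=; rewrite IH catA. Qed.

Lemma wpowM w n k : wpow (wpow w n) k = wpow w (n * k).
Proof. by elim: k => [|k IH] /=; rewrite ?muln0 // IH mulnS wpowD. Qed.

Lemma wpow_zpow w i k : wpow (wzpow w i) k = wzpow w (k%:Z * i).
Proof.
case: i => n.
  have -> : k%:Z * Posz n = Posz (n * k) by rewrite PoszM mulrC.
  by rewrite /wzpow wpowM.
case: k => [|k]; first by rewrite mul0r.
have -> : (k.+1)%:Z * Negz n = Negz (k * n.+1 + n) by rewrite !NegzE; lia.
rewrite /wzpow wpowM; congr wpow; lia.
Qed.


Lemma wpow_shift x y n : wpow (x ++ y) n ++ x = x ++ wpow (y ++ x) n.
Proof. by elim: n => [|n IH] /=; rewrite ?cats0 // -!catA IH. Qed.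

Lemma comm_a_z m : comm m ga (zab m).
Proof.
rewrite /comm /zab wpow_shift.
have := aeq_rel m ga [::]; rewrite !cats0; exact.
Qed.

Lemma comm_az m i j : comm m (wzpow ga i) (wzpow (zab m) j).
Proof.
apply: comm_zpow; apply: comm_sym; apply: comm_zpow; apply: comm_sym.
exact: comm_a_z.
Qed.

Lemma prim_gcd m x : primitive_az m x ->
  exists i j : int, aeq m x (wzpow ga i ++ wzpow (zab m) j) /\ gcdz i j = 1.
Proof.
case=> [[i [j Hx]] Hp]; exists i, j; split => //.
case: (eqVneq (gcdz i j) 1) => // Hg; exfalso; apply: Hp.
case: (eqVneq (gcdz i j) 0) => Hg0.
  move/eqP: Hg0; rewrite gcdz_eq0 => /andP[/eqP Hi /eqP Hj]; subst i j.
  exists [::], 2; split => //; split; first by exists 0, 0; exact: aeq_refl.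
  exact: aeq_sym.
set d := gcdz i j in Hg Hg0.
have Hd : (0 <= d)%R by rewrite /d /gcdz.
move: (Hd) => /= ; case Edn : d => [dn|//] _.
exists (wzpow ga (i %/ d)%Z ++ wzpow (zab m) (j %/ d)%Z), dn.
split; first by move: Hg Hg0; rewrite Edn; case: dn {Edn} => [|[|dn]].
split; first by exists (i %/ d)%Z, (j %/ d)%Z; exact: aeq_refl.
apply: aeq_trans (wpow_comm_cat _ (comm_az _ _ _)) _.
rewrite !wpow_zpow -Edn ![d * _]mulrC !divzK ?dvdz_gcdl ?dvdz_gcdr.
exact: aeq_sym. all: done.
Qed.

End Helpers.

Theorem lemma5p1 (m : nat) (x w : word) (n : nat) :
  2 <= m -> primitive_az m x -> aeq m (wpow w n) x -> n <= m.
Proof.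
move=> Hm Hp Hw.
have [i [j [Hx Hg]]] := prim_gcd Hp.
have H := aeq_trans Hw Hx.
have Ea := cnt_aeq false H; have Eb := cnt_aeq true H.
rewrite cnt_wpow cnt_cat !cnt_wzpow /zab cnt_wpow /= /lval /= in Ea.
rewrite cnt_wpow cnt_cat !cnt_wzpow /zab cnt_wpow /= /lval /= in Eb.
have [u [v Huv]] := Bezoutz i j; rewrite Hg in Huv.
set p := cnt false w in Ea; set q := cnt true w in Eb.
have Eb' : (j * m%:Z = n%:Z * q)%R by rewrite Eb; ring.
have Ea' : (i = n%:Z * p - n%:Z * q)%R by rewrite Ea Eb; ring.
have Em : (m%:Z = n%:Z * (u * m%:Z * (p - q) + v * q))%R.
  rewrite -[LHS]mul1r -Huv mulrDl Ea'.
  rewrite -[(v * j * m%:Z)%R]mulrA Eb'; ring.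
move: Em; set c := (_ + _)%R => Em.
have Hc : (0 < c)%R.
  rewrite ltNge; apply/negP => Hc.
  have : (n%:Z * c <= 0)%R by rewrite mulr_ge0_le0.
  rewrite -Em; lia.
have : (n%:Z <= n%:Z * c)%R.
  by rewrite ler_peMr // ?ler0n //; lia.
rewrite -Em; lia.
Qed.
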